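(* Let $S$ be a sticky tree with $n+1$ nodes ($n\ge1$), let $v_1,\dots,v_n$ be its non-root nodes listed in prefix order, and let $c$ be its certificate-counting function. Let $\mathrm{E}(S)$ be the contour word of $S$ and $\mathrm{D}(S)=u\,d^{c(v_1)}\,u\,d^{c(v_2)}\cdots u\,d^{c(v_n)}$. Then $\mathrm{D}(S)$ and $\mathrm{E}(S)$ are Dyck paths of length $2n$ and $\mathrm{D}(S)\preceq_T \mathrm{E}(S)$, i.e. $[\mathrm{D}(S),\mathrm{E}(S)]$ is an interval of the Tamari lattice of order $n$.
   Context: Sticky trees: a plane tree is a rooted tree in which the children of every node are linearly ordered (left to right). The root has depth $0$, a child of a node of depth $d$ has depth $d+1$. The prefix order is: the root, followed by the prefix order of the subtree of its leftmost child, then of its second child, and so on. $S_u$ denotes the subtree rooted at $u$. A sticky tree is a plane tree $S$ with node set $V$ and a labeling $\ell:V\to\mathbb{N}$ such that: (1) every node $u$ of depth $d$ has $0\le\ell(u)\le d$; (2) every node $u$ of depth $d>0$ has some $v\in S_u$ (possibly $v=u$) with $\ell(v)<d$; (3) for every node $u$ of depth $d$, if some $v\in S_u$ has $\ell(v)=d$, then every node of $S_u$ (including $u$) preceding $v$ in prefix order has label at least $d$. The certificate of a non-root node $u$ of depth $d$ is the first node, in prefix order, of $S_u$ whose label is $<d$. The certificate-counting function $c:V\to\mathbb{N}$ assigns to each node $w$ the number of non-root nodes whose certificate is $w$. Contour word: $\mathrm{E}(S)$ is the word in $\{u,d\}$ obtained by the depth-first traversal of $S$ starting at the root and visiting children from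 left to right, writing $u$ each time one moves from a node to a child and $d$ each time one moves back from a child to its parent. Dyck paths and Tamari lattice: a Dyck path of length $2n$ is a word in $\{u,d\}$ with $n$ letters $u$ and $n$ letters $d$ such that every prefix has at least as many $u$'s as $d$'s. The $i$-th letter $u$ (call it $u_i$) of a Dyck path $D$ is matched with the letter $d$ following it such that the factor $D_i$ strictly between them is itself a Dyck path (balanced); $\ell_D(i)$ denotes the length of $D_i$. For Dyck paths $D,E$ of length $2n$, $D\preceq_T E$ iff $\ell_D(i)\le \ell_E(i)$ for all $1\le i\le n$; this is the Tamari lattice of order $n$, and a pair $[D,E]$ with $D\preceq_T E$ is a Tamari interval. *)

(* Defs.v *)
From mathcomp Require Import all_boot.
Set Implicit Arguments. Unset Strict Implicit. Unset Printing Implicit Defensive.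

Inductive ltree := LNode of nat & seq ltree.

Definition label (t : ltree) : nat := let: LNode l _ := t in l.
Definition children (t : ltree) : seq ltree := let: LNode _ cs := t in cs.

(* All nodes in prefix order, each given as (depth, subtree rooted at it);
   the root of [t] is given depth [d]. *)
Fixpoint subtrees (d : nat) (t : ltree) : seq (nat * ltree) :=
  let: LNode _ cs := t in (d, t) :: flatten (map (subtrees d.+1) cs).

Definition nnodes (t : ltree) : nat := size (subtrees 0 t).

Definition labels (t : ltree) : seq nat := map (fun p => label p.2) (subtrees 0 t).

Definition sticky (S : ltree) : Prop :=
  forall i, i < nnodes S ->
    let d := (nth (0, S) (subtrees 0 S) i).1 in
    let u := (nth (0, S) (subtrees 0 S) i).2 in
    [/\ label u <= d,
        0 < d -> has (fun l => l < d) (labels u)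
      & forall k, k < size (labels u) -> nth 0 (labels u) k = d ->
                  forall j, j <= k -> d <= nth 0 (labels u) j ].

(* Nodes are identified with their index in prefix order (root = 0).
   The subtree S_u of the node of index i occupies indices i .. i+|S_u|-1,
   so the certificate of a non-root node of index i and depth d is the node
   of index i + (position of the first label < d in the prefix order of S_u). *)
Definition certificate (S : ltree) (i : nat) : nat :=
  let p := nth (0, S) (subtrees 0 S) i in
  i + find (fun l => l < p.1) (labels p.2).

Definition cert_count (S : ltree) (w : nat) : nat :=
  count (fun i => certificate S i == w) (iota 1 (nnodes S).-1).

Notation up := true.
Notation down := false.

Fixpoint contour (t : ltree) : seq bool :=
  let: LNode _ cs := t in flatten (map (fun c => up :: rcons (contour c) down) cs).

Definition Dword (S : ltree) : seq bool :=
  flatten [seq up :: nseq (cert_count S k) down | k <- iota 1 (nnodes S).-1].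

Definition nup (w : seq bool) : nat := count (pred1 up) w.
Definition ndown (w : seq bool) : nat := count (pred1 down) w.

Definition dyck (w : seq bool) : bool :=
  (nup w == ndown w) && all (fun k => ndown (take k w) <= nup (take k w)) (iota 0 (size w).+1).

Definition dyck_path (n : nat) (w : seq bool) : bool :=
  (size w == 2 * n) && (nup w == n) && dyck w.

(* Position (0-based) of the i-th letter u (i >= 1). *)
Definition pos_up (w : seq bool) (i : nat) : nat :=
  nth 0 [seq k <- iota 0 (size w) | nth down w k == up] i.-1.

(* Length of the factor following a u up to its matching d: the least m such
   that the first m letters form a Dyck word and the next letter is d. *)
Definition match_len (s : seq bool) : nat :=
  find (fun m => dyck (take m s) && (nth up s m == down)) (iota 0 (size s)).

Definition ell (w : seq bool) (i : nat) : nat := match_len (drop (pos_up w i).+1 w).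

Definition tamari_le (n : nat) (D E : seq bool) : Prop :=
  forall i, 1 <= i <= n -> ell D i <= ell E i.

(* Main.v *)
Require Import Defs.
From mathcomp Require Import all_boot zify.
Set Implicit Arguments. Unset Strict Implicit.

Lemma nup_cat a b : nup (a ++ b) = nup a + nup b.
Proof. by rewrite /nup count_cat. Qed.
Lemma ndown_cat a b : ndown (a ++ b) = ndown a + ndown b.
Proof. by rewrite /ndown count_cat. Qed.
Lemma nup_cons x w : nup (x :: w) = x + nup w.
Proof. by case: x. Qed.
Lemma ndown_cons x w : ndown (x :: w) = (~~ x) + ndown w.
Proof. by case: x. Qed.
Lemma nup0 : nup [::] = 0. Proof. by []. Qed.
Lemma ndown0 : ndown [::] = 0. Proof. by []. Qed.
Lemma size_nud w : size w = nup w + ndown w.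
Proof. elim: w => // b w IH; rewrite nup_cons ndown_cons /= IH; case: b => /=; lia. Qed.
Lemma nup_take m w : nup (take m w) <= nup w.
Proof. by rewrite -{2}(cat_take_drop m w) nup_cat leq_addr. Qed.

Definition dyckP w := nup w = ndown w /\ forall m, ndown (take m w) <= nup (take m w).

Lemma dyckE w : dyck w <-> dyckP w.
Proof.
rewrite /dyck /dyckP; split.
- case/andP => /eqP -> /allP H; split=> // m.
  case: (leqP m (size w)) => hm.
  + apply: H; rewrite mem_iota; lia.
  + rewrite take_oversize; last lia. have := H (size w). rewrite take_size. apply.
    rewrite mem_iota; lia.
- case=> -> H; apply/andP; split => //; apply/allP => k _; exact: H.
Qed.

Lemma find_iota_le (a : pred nat) N m : m < N -> a m -> find a (iota 0 N) <= m.
Proof.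
move=> hm am; rewrite leqNgt; apply/negP => /(before_find 0).
by rewrite nth_iota // add0n am.
Qed.

Lemma find_iota_P (a : pred nat) N : find a (iota 0 N) < N -> a (find a (iota 0 N)).
Proof.
move=> h; have hs : has a (iota 0 N) by rewrite has_find size_iota.
by have := nth_find 0 hs; rewrite nth_iota ?add0n.
Qed.

Lemma match_len_cat x r : dyckP x -> match_len (x ++ down :: r) = size x.
Proof.
move=> [hx hp]; rewrite /match_len.
set a := (fun m => _).
have ha : a (size x).
  by rewrite /a take_size_cat // nth_cat ltnn subnn eqxx andbT; apply/dyckE.
have hsz : size x < size (x ++ down :: r) by rewrite size_cat /=; lia.
apply/eqP; rewrite eqn_leq find_iota_le //=.
rewrite leqNgt; apply/negP => hlt.
have := find_iota_P (ltn_trans hlt hsz). set f := find _ _ in hlt *.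
rewrite /a take_cat nth_cat hlt => /andP [/dyckE [e _] /eqP hd].
have := hp f.+1. rewrite (take_nth up) ?hd; last lia.
rewrite -cats1 nup_cat ndown_cat e /=. lia.
Qed.

Lemma match_len_bound X Y : nup X < ndown X -> match_len (X ++ Y) <= 2 * nup X.
Proof.
move=> hX; set s := X ++ Y.
pose P := fun p => nup (take p s) < ndown (take p s).
have exP : exists p, P p by exists (size X); rewrite /P /s take_size_cat.
case: (ex_minnP exP) => p Pp pmin.
have pX : p <= size X by apply: pmin; rewrite /P /s take_size_cat.
have p0 : 0 < p by move: Pp; rewrite /P; case: p {pmin pX} => // ; rewrite take0.
set m := p.-1.
have hms : m < size s by rewrite /s size_cat; lia.
have nPm : forall k, k <= m -> ndown (take k s) <= nup (take k s).
  move=> k hk; rewrite leqNgt; apply/negP => hk'; have := pmin k hk'. lia.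
have tp : take p s = rcons (take m s) (nth up s m) by rewrite -(take_nth up) // prednK.
move: (Pp); rewrite /P tp -cats1 nup_cat ndown_cat.
have := nPm m (leqnn m).
case hn: (nth up s m) => /= h1 h2; first lia.
have dm : dyckP (take m s).
  split; first lia.
  move=> k; rewrite -take_min; apply: nPm; lia.
have am : (fun m => dyck (take m s) && (nth up s m == down)) m.
  by rewrite hn eqxx andbT; apply/dyckE.
have hf := @find_iota_le (fun m => dyck (take m s) && (nth up s m == down)) _ _ hms am.
rewrite /match_len -/s.
set f := find _ _ in hf *.
have := find_iota_P (leq_ltn_trans hf hms); rewrite -/f => /andP [/dyckE [e _] _].
have -> : f = size (take f s) by rewrite size_take; case: ifP => //; lia.
rewrite size_nud -e.
have -> : take f s = take f X by rewrite /s take_cat; case: ifP => //; lia.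
have := nup_take f X; lia.
Qed.

Fixpoint ltree_ind2 (P : ltree -> Prop) (H0 : forall l, P (LNode l [::]))
  (H1 : forall l c cs, P c -> P (LNode l cs) -> P (LNode l (c :: cs))) t : P t :=
  let: LNode l cs := t in
  (fix G cs : P (LNode l cs) :=
     match cs with [::] => H0 l | c :: cs' => H1 l c cs' (ltree_ind2 H0 H1 c) (G cs') end) cs.

Lemma subtrees_cons d l c cs : subtrees d (LNode l (c :: cs)) =
  (d, LNode l (c :: cs)) :: subtrees d.+1 c ++ behead (subtrees d (LNode l cs)).
Proof. by []. Qed.

Lemma subtrees_hd d t : subtrees d t = (d, t) :: behead (subtrees d t).
Proof. by case: t. Qed.

Lemma size_sub t d : size (subtrees d t) = nnodes t.
Proof.
rewrite /nnodes; elim/ltree_ind2: t d => // l c cs IHc IHr d.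
rewrite !subtrees_cons /= !size_cat IHc.
have := IHr d; have := IHr 0; rewrite [subtrees d _]subtrees_hd [subtrees 0 (LNode l cs)]subtrees_hd /=.
have := IHc 1; lia.
Qed.

Lemma nnodes_gt0 t : 0 < nnodes t.
Proof. by rewrite /nnodes subtrees_hd. Qed.

Lemma nnodes_cons l c cs : nnodes (LNode l (c :: cs)) = nnodes c + nnodes (LNode l cs).
Proof.
rewrite -(size_sub _ 0) subtrees_cons /= size_cat (size_sub c).
rewrite -(size_sub (LNode l cs) 0) [subtrees 0 (LNode l cs)]subtrees_hd /=.
have := nnodes_gt0 c; lia.
Qed.

Lemma depth_pos t d : all (fun p => d < p.1) (behead (subtrees d t)).
Proof.
elim/ltree_ind2: t d => // l c cs IHc IHr d.
rewrite subtrees_cons /= all_cat IHr andbT subtrees_hd /= ltnSn /=.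
by apply: sub_all (IHc d.+1) => p /= h; apply: ltn_trans h.
Qed.

Lemma sub_drop t d x0 i : i < size (subtrees d t) ->
  exists r, drop i (subtrees d t) =
    subtrees (nth x0 (subtrees d t) i).1 (nth x0 (subtrees d t) i).2 ++ r.
Proof.
case: i => [|i] h.
  by exists [::]; rewrite drop0 cats0 {2 3}subtrees_hd.
elim/ltree_ind2: t d i h => [l d i|l c cs IHc IHr d i]; first by [].
rewrite subtrees_cons /= size_cat => h.
rewrite drop_cat nth_cat; case: ifP => hi.
  case: i hi {h} => [|i] hi.
    by exists (behead (subtrees d (LNode l cs))); rewrite drop0 {2 3}subtrees_hd.
  have [r ->] := IHc d.+1 i hi; by exists (r ++ behead (subtrees d (LNode l cs))); rewrite catA.
have h' : (i - size (subtrees d.+1 c)).+1 < size (subtrees d (LNode l cs)).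
  rewrite [subtrees d (LNode l cs)]subtrees_hd /=; move: hi => /negbT; lia.
have := IHr d _ h'. rewrite [subtrees d (LNode l cs)]subtrees_hd /=. done.
Qed.

Lemma contour_cons l c cs : contour (LNode l (c :: cs)) = up :: contour c ++ down :: contour (LNode l cs).
Proof. by rewrite /= cat_rcons. Qed.

Lemma contour_props t : [/\ nup (contour t) = (nnodes t).-1,
  ndown (contour t) = (nnodes t).-1 & dyckP (contour t)].
Proof.
elim/ltree_ind2: t => [l|l c cs [u1 d1 [e1 p1]] [u2 d2 [e2 p2]]].
  by split => //; split => // m; rewrite take0.
rewrite contour_cons nnodes_cons.
have g1 := nnodes_gt0 c; have g2 := nnodes_gt0 (LNode l cs).
move: (contour (LNode l cs)) (nnodes (LNode l cs)) u2 d2 e2 p2 g2 => R nR u2 d2 e2 p2 g2.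
rewrite !(nup_cons, ndown_cons, nup_cat, ndown_cat) /=.
split; [lia|lia|split].
  rewrite !(nup_cons, ndown_cons, nup_cat, ndown_cat) /=; lia.
case=> [|m]; first by rewrite take0.
rewrite take_cons nup_cons ndown_cons /= take_cat; case: ifP => hm.
  have := p1 m; lia.
case: (m - size (contour c)) => [|k] /=.
  rewrite cats0; lia.
rewrite !(nup_cat, ndown_cat, nup_cons, ndown_cons) /=. have := p2 k; lia.
Qed.

Lemma sub_contour t d x0 i : 0 < i < size (subtrees d t) ->
  exists a b, contour t = a ++ up :: contour (nth x0 (subtrees d t) i).2 ++ down :: b
    /\ nup a = i.-1.
Proof.
case: i => [|i] // /= h.
elim/ltree_ind2: t d i h => [l d i|l c cs IHc IHr d i]; first by [].
rewrite contour_cons subtrees_cons /= size_cat => h.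
rewrite nth_cat; case: ifP => hi.
  case: i hi {h} => [|i] hi.
    by exists [::], (contour (LNode l cs)); rewrite subtrees_hd.
  have [a [b [-> ha]]] := IHc d.+1 i hi.
  exists (up :: a), (b ++ down :: contour (LNode l cs)); split.
    by rewrite /= -catA /= -catA.
  by rewrite nup_cons ha.
have h' : (i - size (subtrees d.+1 c)).+1 < size (subtrees d (LNode l cs)).
  rewrite [subtrees d (LNode l cs)]subtrees_hd /=; move: hi => /negbT; lia.
have [a [b []]] := IHr d _ h'. rewrite [subtrees d (LNode l cs)]subtrees_hd /= => -> ha.
exists (up :: contour c ++ down :: a), b; split; first by rewrite /= -!catA.
rewrite nup_cons nup_cat nup_cons ha /=.
case: (contour_props c) => -> _ _. rewrite size_sub in hi *.
have := nnodes_gt0 c; move: hi => /negbT; lia.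
Qed.

Definition blocks (f : nat -> nat) ks := flatten [seq up :: nseq (f k) down | k <- ks].

Lemma blocks_cat f a b : blocks f (a ++ b) = blocks f a ++ blocks f b.
Proof. by rewrite /blocks map_cat flatten_cat. Qed.
Lemma blocks_cons f k ks : blocks f (k :: ks) = up :: nseq (f k) down ++ blocks f ks.
Proof. by []. Qed.

Lemma nup_blocks f ks : nup (blocks f ks) = size ks.
Proof.
elim: ks => // k ks IH; rewrite blocks_cons nup_cons nup_cat IH /nup count_nseq /=; lia.
Qed.
Lemma ndown_blocks f ks : ndown (blocks f ks) = sumn (map f ks).
Proof.
elim: ks => // k ks IH; rewrite blocks_cons ndown_cons ndown_cat IH /ndown count_nseq /=; lia.
Qed.

Lemma blocks_prefix f ks e : (forall q, sumn (map f (take q ks)) <= q + e) ->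
  forall m, ndown (take m (blocks f ks)) <= nup (take m (blocks f ks)) + e.
Proof.
elim: ks e => [|k ks IH] e H m; first by rewrite /blocks /=; case: m.
have h1 := H 1; rewrite /= in h1.
rewrite blocks_cons; case: m => [|m]; first by rewrite take0.
rewrite take_cons nup_cons ndown_cons /= take_cat size_nseq; case: ifP => hm.
  rewrite take_nseq; last lia.
  rewrite /nup /ndown !count_nseq /=; lia.
rewrite ndown_cat nup_cat /nup /ndown !count_nseq /= -/(nup _) -/(ndown _).
have := IH (e.+1 - f k) _ (m - f k).
have : forall q, sumn [seq f i | i <- take q ks] <= q + (e.+1 - f k).
  move=> q; have := H q.+1; rewrite /=; clear -h1; rewrite take0 /= in h1.
  move: (sumn _) => S. lia.
move=> hq /(_ hq). lia.
Qed.

Lemma sum_count (f : nat -> nat) J K : uniq K ->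
  sumn [seq count (fun j => f j == k) J | k <- K] = count (fun j => f j \in K) J.
Proof.
elim: K => [|k K IH] /=.
  by move=> _; elim: J.
case/andP => kK uK; rewrite IH //; clear IH.
elim: J => //= j J IHJ; rewrite in_cons; case: eqP => [->|_] /=; [rewrite (negbTE kK) |]; lia.
Qed.

Lemma count_lt m n q : count (fun j => j < q) (iota m n) <= q - m.
Proof. elim: n m => //= n IH m; have := IH m.+1; lia. Qed.

Lemma pos_upE a w : pos_up (a ++ up :: w) (nup a).+1 = size a.
Proof.
rewrite /pos_up /= size_cat /= iotaD filter_cat add0n.
have -> : [seq k <- iota 0 (size a) | nth down (a ++ up :: w) k == up] =
          [seq k <- iota 0 (size a) | nth down a k == up].
  apply: eq_in_filter => k; rewrite mem_iota => hk; rewrite nth_cat; case: ifP => //; lia.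
rewrite nth_cat size_filter.
have -> : count (fun k => nth down a k == up) (iota 0 (size a)) = nup a.
  by rewrite /nup -{3}(mkseq_nth down a) /mkseq count_map.
rewrite ltnn subnn /= nth_cat ltnn subnn eqxx.
by [].
Qed.

Lemma drop_upE a w : drop (size a).+1 (a ++ up :: w) = w.
Proof. by rewrite -cat_rcons drop_size_cat // size_rcons. Qed.
Unset Implicit Arguments.

Theorem proposition4p1 (S : ltree) (n : nat) :
  sticky S -> nnodes S = n.+1 -> 1 <= n ->
  [/\ dyck_path n (Dword S), dyck_path n (contour S)
    & tamari_le n (Dword S) (contour S)].
Proof.
move=> hS hN _.
set L := subtrees 0 S.
set x0 := (0, S).
have sL : size L = n.+1 by rewrite /L size_sub.
have Tsz : forall i, i < n.+1 -> i + nnodes (nth x0 L i).2 <= n.+1.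
  move=> i hi; have hi' : i < size L by rewrite sL.
  have [r hr] := sub_drop x0 hi'.
  have := congr1 size hr; rewrite size_drop size_cat !size_sub hN -/L; lia.
have Tsub : forall i k, i < n.+1 -> k < nnodes (nth x0 L i).2 ->
   i + k + nnodes (nth x0 L (i + k)).2 <= i + nnodes (nth x0 L i).2.
  move=> i k hi hk. have hi' : i < size L by rewrite sL.
  have [r hr] := sub_drop x0 hi'. rewrite -/L in hr.
  move: hr hk; set T := nth x0 L i => hr hk.
  have hk' : k < size (subtrees T.1 T.2) by rewrite size_sub.
  have eq : nth x0 L (i + k) = nth x0 (subtrees T.1 T.2) k
    by rewrite -nth_drop hr nth_cat hk'.
  have [r' hr'] := sub_drop x0 hk'.
  have := congr1 size hr'; rewrite size_drop size_cat !size_sub -eq; lia.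
have depth : forall j, 0 < j < n.+1 -> 0 < (nth x0 L j).1.
  move=> j /andP [hj0 hj]. have := depth_pos S 0; move/(all_nthP x0) => H.
  rewrite -(prednK hj0) -nth_behead; apply: H; rewrite size_behead -/L sL; lia.
have certge : forall j, j <= certificate S j by move=> j; rewrite /certificate leq_addr.
have cert : forall j, 0 < j < n.+1 -> certificate S j < j + nnodes (nth x0 L j).2.
  move=> j hj; have hjN : j < nnodes S by rewrite hN; case/andP: hj.
  have := hS j hjN; rewrite /= -/L -/x0 => -[_ h2 _].
  have := h2 (depth j hj); rewrite has_find /labels size_map -/(nnodes _).
  by rewrite /certificate /= -/L -/x0 ltn_add2l.
have sumD : forall K, uniq K ->
    sumn (map (cert_count S) K) = count (fun j => certificate S j \in K) (iota 1 n).
  move=> K uK; rewrite -(sum_count _ _ uK); congr sumn; apply: eq_map => k.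
  by rewrite /cert_count hN.
have hD : Dword S = blocks (cert_count S) (iota 1 n) by rewrite /Dword hN.
have nupD : nup (Dword S) = n by rewrite hD nup_blocks size_iota.
have ndownD : ndown (Dword S) = n.
  rewrite hD ndown_blocks sumD ?iota_uniq // -[RHS](size_iota 1 n) -count_predT.
  apply: eq_in_count => j; rewrite mem_iota => hj /=; rewrite mem_iota.
  have := cert j ltac:(lia); have := Tsz j ltac:(lia); have := certge j; lia.
have [nupE ndownE dE] := contour_props S.
split.
- rewrite /dyck_path size_nud nupD ndownD eqxx /=.
  apply/andP; split; first lia.
  apply/dyckE; split; first by rewrite nupD ndownD.
  move=> m; rewrite -[nup _]addn0 hD; apply: blocks_prefix => q.
  rewrite take_iota sumD ?iota_uniq // addn0.
  have h1 : count (fun j => certificate S j \in iota 1 (minn q n)) (iota 1 n)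
      <= count (fun j => j < (minn q n).+1) (iota 1 n).
    apply: sub_count => j /=; rewrite mem_iota; have := certge j; lia.
  have := count_lt 1 n (minn q n).+1; lia.
- rewrite /dyck_path size_nud nupE ndownE hN /=.
  apply/andP; split; first (apply/andP; split; apply/eqP; lia).
  exact/dyckE.
move=> i hi.
have hi0 : 0 < i < n.+1 by lia.
set T := (nth x0 L i).2.
set s := nnodes T.
have s0 : 0 < s by apply: nnodes_gt0.
have Ts : i + s <= n.+1 by apply: Tsz; lia.
have ellE : ell (contour S) i = 2 * s.-1.
  have hi' : 0 < i < size (subtrees 0 S) by rewrite -/L sL.
  have [a [b [hc ha]]] := sub_contour x0 hi'.
  rewrite -/L -/T in hc.
  have hp : forall w, pos_up (a ++ up :: w) i = size a.
    by move=> w; rewrite (_ : i = (nup a).+1); [exact: pos_upE | lia].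
  rewrite /ell hc hp drop_upE.
  have [u1 d1 e1] := contour_props T.
  rewrite match_len_cat // size_nud u1 d1 -/s; lia.
rewrite ellE.
have hsplit : iota 1 n = iota 1 i.-1 ++ iota (1 + i.-1) s ++ iota (1 + i.-1 + s) (n - i.-1 - s).
  rewrite -iotaD -iotaD; congr iota; lia.
have e1 : 1 + i.-1 = i by lia.
rewrite e1 in hsplit.
have hs1 : iota i s = i :: iota i.+1 s.-1 by rewrite -(prednK s0).
set c := cert_count S.
set A := blocks c (iota 1 i.-1).
set X := nseq (c i) down ++ blocks c (iota i.+1 s.-1).
set Z := blocks c (iota (i + s) (n - i.-1 - s)).
have hDe : Dword S = A ++ up :: X ++ Z.
  by rewrite hD hsplit !blocks_cat hs1 blocks_cons -/A -/Z /X /c /= -catA.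
have nA : nup A = i.-1 by rewrite nup_blocks size_iota.
have hp : forall w, pos_up (A ++ up :: w) i = size A.
  by move=> w; rewrite (_ : i = (nup A).+1); [exact: pos_upE | lia].
have nX : nup X = s.-1 by rewrite /X nup_cat nup_blocks size_iota /nup count_nseq.
have dX : s <= ndown X.
  have -> : ndown X = sumn (map c (iota i s)).
    by rewrite hs1 /X ndown_cat ndown_blocks /ndown count_nseq /= mul1n.
  rewrite sumD ?iota_uniq // hsplit !count_cat.
  apply: leq_trans _ (leq_addl _ _); apply: leq_trans _ (leq_addr _ _).
  rewrite -[Y in Y <= _](size_iota i s) -count_predT.
  apply/eq_leq/eq_in_count => j; rewrite mem_iota => hj /=; rewrite mem_iota.
  have := Tsub i (j - i) ltac:(lia) ltac:(rewrite -/T -/s; lia).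
  rewrite -/T -/s (_ : i + (j - i) = j); last lia.
  have := cert j ltac:(lia); have := certge j; lia.
rewrite /ell hDe hp drop_upE.
apply: leq_trans (match_len_bound _ _) _; first lia.
by rewrite nX.
Qed.
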